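(* There exists an infinite class of feasible configurations of size $n=4$ such that, for each configuration $G$ of this class, every dedicated leader election algorithm for $G$ takes time $\Omega(\sigma)$, where $\sigma$ is the span of $G$.
   Context: Model. A configuration is a finite simple undirected connected graph $G$ in which each node $v$ is tagged with a non-negative integer $t_v$ (wakeup tag); smallest tag $0$, span $\sigma$ = largest tag; size = number of nodes. Nodes are anonymous and communicate in synchronous global rounds. A node $v$ wakes up in the first global round $r\le t_v$ in which it receives a message, if any, and otherwise in global round $t_v$; its local clock is $0$ in its wakeup round, it acts from local round $1$, and nodes do not know the global clock. In each round a node transmits a message to all neighbours, listens, or terminates. A listening node receives $M$ if exactly one neighbour transmits ($M$), hears collision noise (distinct from silence and messages) if at least two neighbours transmit, and silence otherwise; a transmitting node hears nothing. A DRIP is a common function mapping a node's history (what it heard in each local round $0,\ldots,i-1$, including whether/by which message it was woken) to its action in local round $i\ge1$, with every node eventually terminating permanently; a decision function maps each node's final history to $\{0,1\}$; a dedicated leader election algorithm for $G$ is a DRIP plus decision function such that exactly one node of $G$ outputs $1$; $G$ is feasible if one exists. The time of such an algorithm is the number of rounds until the nodes terminate. *)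

(* Defs.v *)
From mathcomp Require Import all_boot.
From Stdlib Require List.

Set Implicit Arguments.
Unset Strict Implicit.
Unset Printing Implicit Defensive.

(* A configuration on the node set 'I_n: adjacency (as a finite function,
   so that Leibniz and extensional equality coincide) and wakeup tags. *)
Record config (n : nat) := Config {
  adj : {ffun 'I_n * 'I_n -> bool};
  tag : {ffun 'I_n -> nat}
}.

Definition edge n (G : config n) : rel 'I_n := fun u v => adj G (u, v).

Definition is_configuration n (G : config n) : Prop :=
  [/\ (forall u, ~~ edge G u u),
      (forall u v, edge G u v = edge G v u),
      (forall u v, connect (edge G) u v)
    & (exists v, tag G v = 0)].

Definition span n (G : config n) : nat := \max_(v : 'I_n) tag G v.

Inductive obs (M : Type) := Silence | Noise | Heard of M.
Arguments Silence {M}. Arguments Noise {M}. Arguments Heard {M} _.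

Inductive action (M : Type) := Transmit of M | Listen | Terminate.
Arguments Transmit {M} _. Arguments Listen {M}. Arguments Terminate {M}.

(* history at local round i: what was heard in local rounds 0..i-1 *)
Definition history (M : Type) := seq (obs M).

(* a DRIP: common map from histories to actions *)
Definition drip (M : Type) := history M -> action M.

(* state of a node: asleep, awake with its current history, or terminated
   with its final history and the global round of termination *)
Inductive nstate (M : Type) := Asleep | Active of history M | Done of history M & nat.
Arguments Asleep {M}. Arguments Active {M} _. Arguments Done {M} _ _.

Section Exec.
Variables (M : Type) (n : nat) (G : config n) (A : drip M).

Definition transmits (st : 'I_n -> nstate M) (u : 'I_n) : option M :=
  match st u with
  | Active h => match A h with Transmit m => Some m | _ => None end
  | _ => None
  end.

(* what node v would hear in the current round if listening *)
Definition hears (st : 'I_n -> nstate M) (v : 'I_n) : obs M :=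
  match pmap (fun u => if edge G v u then transmits st u else None) (enum 'I_n) with
  | [::] => Silence
  | [:: m] => Heard m
  | _ => Noise
  end.

(* global round r, given the states after rounds 0..r-1 *)
Definition step (r : nat) (st : 'I_n -> nstate M) : 'I_n -> nstate M :=
  fun v =>
  match st v with
  | Asleep =>
      match hears st v with
      | Heard m => Active [:: Heard m]
      | o => if tag G v <= r then Active [:: o]
             else Asleep
      end
  | Active h =>
      match A h with
      | Transmit _ => Active (rcons h Silence)     (* transmitter hears nothing *)
      | Listen => Active (rcons h (hears st v))
      | Terminate => Done h r
      end
  | Done h t => Done h t
  end.

(* exec r = states of all nodes after global rounds 0..r-1 *)
Fixpoint exec (r : nat) : 'I_n -> nstate M :=
  match r with
  | 0 => fun _ => Asleep
  | r'.+1 => step r' (exec r')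
  end.

End Exec.

Definition all_done M n (st : 'I_n -> nstate M) : Prop :=
  forall v, exists h t, st v = Done h t.

Definition leader_election M n (G : config n) (A : drip M) (d : history M -> bool)
  : Prop :=
  exists r, all_done (exec G A r) /\
    exists! v, exists h t, exec G A r v = Done h t /\ d h = true.

Definition feasible n (G : config n) : Prop :=
  exists (M : Type) (A : drip M) (d : history M -> bool), leader_election G A d.

(* Main.v *)
Require Import Defs.
From mathcomp Require Import all_boot.
From Stdlib Require List FunctionalExtensionality.
From mathcomp Require Import zify.
From Stdlib Require Import Lia.
Set Implicit Arguments.

Definition e (i j : nat) : bool :=
  match i, j with
  | 0, 1 | 1, 0 | 0, 2 | 2, 0 | 1, 3 | 3, 1 | 2, 3 | 3, 2 => true
  | _, _ => false end.
Definition adj0 : {ffun 'I_4 * 'I_4 -> bool} := [ffun p => e (val p.1) (val p.2)].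
Definition tg (s : nat) (i : nat) : nat := if i == 3 then s.+4.+1 else if i == 0 then 0 else 1.
Definition cfg (s : nat) : config 4 :=
  Config adj0 [ffun i : 'I_4 => tg s (val i)].
Definition Alg : drip unit := fun h => match h with
  | [:: _] => Transmit tt | [:: _; _] => Listen | _ => Terminate end.
Definition dec (h : history unit) : bool := match h with
  | [:: _; _; Noise] => true | _ => false end.

Definition ordl : seq 'I_4 := [:: @Ordinal 4 0 isT; @Ordinal 4 1 isT; @Ordinal 4 2 isT; @Ordinal 4 3 isT].
Lemma enumE : enum 'I_4 = ordl.
Proof. apply: (inj_map val_inj); by rewrite val_enum_ord. Qed.

Section S.
Variables (M : Type) (A : drip M) (s : nat).

Definition hears' (st : 'I_4 -> nstate M) (v : 'I_4) : obs M :=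
  match pmap (fun u : 'I_4 => if e v u then transmits A st u else None) ordl with
  | [::] => Silence
  | [:: m] => Heard m
  | _ => Noise
  end.

Definition step' (r : nat) (st : 'I_4 -> nstate M) : 'I_4 -> nstate M :=
  fun v =>
  match st v with
  | Asleep =>
      match hears' st v with
      | Heard m => Active [:: Heard m]
      | o => if tg s v <= r then Active [:: o]
             else Asleep
      end
  | Active h =>
      match A h with
      | Transmit _ => Active (rcons h Silence)
      | Listen => Active (rcons h (hears' st v))
      | Terminate => Done h r
      end
  | Done h t => Done h t
  end.

Fixpoint exec' (r : nat) : 'I_4 -> nstate M :=
  match r with
  | 0 => fun _ => Asleep
  | r'.+1 => step' r' (exec' r')
  end.

Lemma hearsE st v : hears (cfg s) A st v = hears' st v.
Proof.
rewrite /hears /hears' enumE.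
have -> : (fun u => if edge (cfg s) v u then transmits A st u else None) =
          (fun u : 'I_4 => if e v u then transmits A st u else None).
  by apply: FunctionalExtensionality.functional_extensionality => u; rewrite /edge /= ffunE.
by [].
Qed.

Lemma execE r : exec (cfg s) A r = exec' r.
Proof.
elim: r => [|r IH] //=; rewrite IH.
apply: FunctionalExtensionality.functional_extensionality => v.
by rewrite /step /step' hearsE /= ffunE.
Qed.
End S.

Definition o0 : 'I_4 := @Ordinal 4 0 isT.
Definition o1 : 'I_4 := @Ordinal 4 1 isT.
Definition o2 : 'I_4 := @Ordinal 4 2 isT.
Definition o3 : 'I_4 := @Ordinal 4 3 isT.

Section Low.
Variables (M : Type) (A : drip M) (s : nat).

Lemma sym r : exec' A s r o1 = exec' A s r o2.
Proof.
elim: r => [|r IH] //=.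
by rewrite /step' /= -IH.
Qed.

Lemma hears3 st m : st o1 = st o2 -> hears' A st o3 <> Heard m.
Proof.
move=> H; rewrite /hears' /= /transmits -H.
case: (st o1) => // h; case: (A h) => //.
Qed.

Lemma asleep r : r <= s.+4.+1 -> exec' A s r o3 = Asleep.
Proof.
elim: r => [|r IH] //= Hr.
rewrite /step' IH ?(ltnW Hr) //.
case Hh: (hears' A _ o3) => [||m].
- by rewrite /= leqNgt Hr.
- by rewrite /= leqNgt Hr.
- by have := @hears3 _ m (sym r); rewrite Hh.
Qed.
End Low.

Definition st_mid : 'I_4 -> nstate unit := fun x =>
  match val x with
  | 0 => Done [:: Silence; Silence; Noise] 3
  | 1 | 2 => Done [:: Heard tt; Silence; Silence] 4
  | _ => Asleep end.

Lemma ex5 s x : @exec' unit Alg s 5 x = st_mid x.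
Proof. case: x => [[|[|[|[|?]]]] ?] //; vm_compute; reflexivity. Qed.

Lemma mid s j : j <= s -> @exec' unit Alg s j.+4.+1 = st_mid.
Proof.
elim: j => [|j IH] Hj.
  by apply: FunctionalExtensionality.functional_extensionality => x; rewrite ex5.
change (step' Alg s j.+1.+4 (exec' Alg s j.+1.+4) = st_mid); rewrite IH ?(ltnW Hj) //.
apply: FunctionalExtensionality.functional_extensionality => x.
case: x => [[|[|[|[|?]]]] ?] //.
rewrite /step' /=.
by have -> : (tg s 3 <= j.+1.+4) = false by rewrite /tg /= !ltnS leqNgt Hj.
Qed.

Definition st6 : 'I_4 -> nstate unit := fun x =>
  match val x with
  | 0 => Done [:: Silence; Silence; Noise] 3
  | 1 | 2 => Done [:: Heard tt; Silence; Silence] 4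
  | _ => Active [:: Silence] end.

Lemma step6 s : @step' unit Alg s s.+4.+1 st_mid = st6.
Proof.
apply: FunctionalExtensionality.functional_extensionality => x.
case: x => [[|[|[|[|?]]]] ?] //.
by rewrite /step' /= leqnn.
Qed.

Definition fin s : 'I_4 -> nstate unit := fun x =>
  match val x with
  | 0 => Done [:: Silence; Silence; Noise] 3
  | 1 | 2 => Done [:: Heard tt; Silence; Silence] 4
  | _ => Done [:: Silence; Silence; Silence] s.+4.+4 end.

Lemma final s x : @exec' unit Alg s s.+4.+4.+1 x = fin s x.
Proof.
have -> : @exec' unit Alg s s.+4.+4.+1 =
  step' Alg s s.+4.+4 (step' Alg s s.+4.+3 (step' Alg s s.+4.+2 (exec' Alg s s.+4.+2))) by [].
have -> : @exec' unit Alg s s.+4.+2 = st6 by rewrite -(@step6 s) -(@mid s s (leqnn s)).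
case: x => [[|[|[|[|?]]]] ?] //.
Qed.

Lemma tag3 s : Defs.tag (cfg s) o3 = s.+4.+1.
Proof. by rewrite /= ffunE. Qed.

Lemma inle (l : seq (config 4)) G : List.In G l -> Defs.tag G o3 <= sumn (map (fun G => Defs.tag G o3) l).
Proof.
elim: l => [|a l IH] //= [->|H]; first exact: leq_addr.
by apply: leq_trans (IH H) _; apply: leq_addl.
Qed.

Lemma edgeE s u v : edge (cfg s) u v = e u v.
Proof. by rewrite /edge /= ffunE. Qed.

Lemma isconf s : is_configuration (cfg s).
Proof.
have c0 : forall u, connect (edge (cfg s)) o0 u.
  have e01 : connect (edge (cfg s)) o0 o1 by apply: connect1; rewrite edgeE.
  case=> [[|[|[|[|?]]]] H] //.
  - by have -> : Ordinal H = o0 by apply: val_inj.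
  - by have -> : Ordinal H = o1 by apply: val_inj.
  - by apply: connect1; rewrite edgeE.
  - by apply: connect_trans e01 _; apply: connect1; rewrite edgeE.
have sy : forall u v, edge (cfg s) u v = edge (cfg s) v u.
  by move=> u v; rewrite !edgeE; case: u => [[|[|[|[|?]]]] ?]; case: v => [[|[|[|[|?]]]] ?].
split => //.
- by move=> u; rewrite edgeE; case: u => [[|[|[|[|?]]]] ?].
- move=> u v; apply: connect_trans (c0 v).
  by rewrite (sym_connect_sym sy).
- by exists o0; rewrite /= ffunE.
Qed.

Lemma feas s : feasible (cfg s).
Proof.
exists unit, Alg, dec, s.+4.+4.+1; rewrite execE; split.
  by move=> x; rewrite final; case: x => [[|[|[|[|?]]]] ?] //=; do 2 eexists.
exists o0; split.
  by rewrite final; do 2 eexists; split; first reflexivity.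
move=> x [h [t []]]; rewrite final; case: x => [[|[|[|[|?]]]] ?] //= [<- _] //.
by move=> _; apply: val_inj.
Qed.

Theorem proposition3 :
  exists C : config 4 -> Prop,
    (forall G, C G -> is_configuration G /\ feasible G) /\
    (forall s : seq (config 4), exists G, C G /\ ~ List.In G s) /\
    exists k : nat, 0 < k /\
      forall G, C G ->
      forall (M : Type) (A : drip M) (d : history M -> bool),
        leader_election G A d ->
        forall r, all_done (exec G A r) -> span G <= k * r.
Proof.
exists (fun G => exists s, G = cfg s); split; [|split].
- by move=> G [s ->]; split; [apply: isconf | apply: feas].
- move=> l; exists (cfg (sumn (map (fun G => Defs.tag G o3) l))); split; first by eexists.
  move/inle; rewrite tag3; set k := sumn _; move=> H; lia.
- exists 1; split => // G [s ->] M A d _ r Hd.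
  have [h [t Ht]] := Hd o3.
  have Hr : s.+4.+1 < r.
    rewrite ltnNge; apply/negP => Hle.
    by move: Ht; rewrite execE asleep.
  rewrite mul1n; apply/bigmax_leqP => i _; rewrite ffunE.
  apply: leq_trans (ltnW Hr); rewrite /tg.
  case: ifP => // _; case: ifP => // _.
Qed.
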